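(* Let $c\ge\lceil n/2\rceil$ and let $\mathbf{s}_n\in\mathcal{B}(n,c,d_1)$ with $d_1=n-c$ and $add(\mathbf{s}_n)=t_1$. Suppose that for some integer $0<b<n$ the shifted sequence $R^b(\mathbf{s}_n)$ belongs to $\mathcal{B}(n,c,d_2)$ and $add(R^b(\mathbf{s}_n))=t_2\ge t_1$. If $d_1+d_2\le c+t_2+t_1+1$, then $b=d_2$.
   Context: All sequences are binary (entries in $\mathbb{Z}_2$), $\overline{x}=x\oplus1$, $x\bmod d$ is the least nonnegative residue, and $\mathbf{a}^q$ is the concatenation of $q$ copies of $\mathbf a$. For $\mathbf{s}_n=(s_0,\dots,s_{n-1})$, $\mathbf{s}_j=(s_0,\dots,s_{j-1})$. A length-$m$ sequence is periodic if it is the concatenation of $m/e$ copies of a length-$e$ sequence for a proper divisor $e$ of $m$, aperiodic otherwise. Right circular shift: $R^k(\mathbf{s}_n)=(s_{n-k},\dots,s_{n-1},s_0,\dots,s_{n-k-1})$. For $c\ge\lfloor n/2\rfloor$ and $1\le d\le\min\{n-c,\lfloor n/2\rfloor\}$, $\mathcal{B}(n,c,d)$ is the set of aperiodic length-$n$ sequences $\mathbf{s}_n$ with $\mathbf{s}_d$ aperiodic and $\mathbf{s}_{c+d}=(s_0,\dots,s_{d-1})^q(s_0,\dots,s_{r-1},\overline{s_r})$, where $q=\lfloor(c+d-1)/d\rfloor$, $r=c+d-1-qd$, and $s_{c+d},\dots,s_{n-1}$ are arbitrary. For $\mathbf{s}_n\in\mathcal{B}(n,c,d)$, $add(\mathbf{s}_n)$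 is the integer $t\ge0$ such that $s_{n-1-i}=s_{(d-1-i)\bmod d}$ for $0\le i<t$ and $s_{n-1-t}\neq s_{(d-1-t)\bmod d}$. *)

(* Defs.v *)
From mathcomp Require Import all_boot.
Set Implicit Arguments. Unset Strict Implicit. Unset Printing Implicit Defensive.

Definition periodic (s : seq bool) : Prop :=
  exists e : nat, [/\ 0 < e, e < size s, e %| size s &
    s = flatten (nseq (size s %/ e) (take e s))].

Definition aperiodic (s : seq bool) : Prop := ~ periodic s.

(* Right circular shift R^k: (s_{n-k},...,s_{n-1},s_0,...,s_{n-k-1}) *)
Definition Rshift (k : nat) (s : seq bool) : seq bool := rotr k s.

Definition inB (n c d : nat) (s : seq bool) : Prop :=
  let q := (c + d - 1) %/ d in
  let r := c + d - 1 - q * d in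
  [/\ size s = n, n./2 <= c, 1 <= d & d <= minn (n - c) n./2] /\
  [/\ aperiodic s, aperiodic (take d s) &
      take (c + d) s =
        flatten (nseq q (take d s)) ++ rcons (take r s) (~~ nth false s r)].

(* add(s) = t for s in B(n,c,d):  s_{n-1-i} = s_{(d-1-i) mod d} for i < t,
   and s_{n-1-t} <> s_{(d-1-t) mod d}.  Note ((d-1-i) mod d) = d-1-(i %% d)
   for d >= 1 (least nonnegative residue). *)
Definition is_add (n d : nat) (s : seq bool) (t : nat) : Prop :=
  [/\ t < n,
      (forall i, i < t -> nth false s (n - 1 - i) = nth false s (d - 1 - i %% d)) &
      nth false s (n - 1 - t) != nth false s (d - 1 - t %% d)].

(* Main.v *)
Require Import Defs.
From mathcomp Require Import all_boot zify.
Set Implicit Arguments. Unset Strict Implicit. Unset Printing Implicit Defensive.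


Lemma one_defect (y : nat -> bool) (m d k0 : nat) : 0 < d -> d <= m -> k0 < m ->
  (forall k, k < m -> k != k0 -> y k = y (if k + d < m then k + d else k + d - m)) ->
  y k0 = y (if k0 + d < m then k0 + d else k0 + d - m).
Proof.
move=> d0 dm k0m H.
have m0 : 0 < m by lia.
have sigE : forall k, k < m -> (k + d) %% m = (if k + d < m then k + d else k + d - m).
  move=> k km; case: ifP => h; first by rewrite modn_small.
  have -> : k + d = (k + d - m) + m by lia.
  by rewrite modnDr modn_small; lia.
pose h (i : 'I_m) : 'I_m := Ordinal (ltn_pmod (i + d) m0).
have hinj : injective h.
  move=> i j /(congr1 val) /= /eqP; rewrite eqn_modDr !modn_small //.
  by move/eqP => e; apply: val_inj.
pose F (i : 'I_m) := y i (+) y (h i).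
have B0 : \big[addb/false]_(i < m) F i = false.
  have E := reindex_inj (op:=addb) (x:=false) (P:=xpredT) (F:=fun i : 'I_m => y i) hinj.
  by rewrite /F big_split /= -E addbb.
rewrite -sigE //.
case E0: (y k0 == y ((k0 + d) %% m)); first by apply/eqP.
have Hne : y k0 != y ((k0 + d) %% m) by rewrite E0.
have : \big[addb/false]_(i < m) F i = true.
  rewrite (bigD1 (Ordinal k0m)) //= big1.
    by rewrite /F /= addbF; move: Hne; case: (y k0); case: (y ((k0 + d) %% m)).
  move=> i /negP ne; rewrite /F /=.
  rewrite sigE // -H //; first by rewrite addbb.
  by apply/negP=> /eqP e; apply: ne; apply/eqP/val_inj.
by rewrite B0.
Qed.

Lemma size_flatten_nseq (w : seq bool) q : size (flatten (nseq q w)) = q * size w.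
Proof. by elim: q => [|q IH] //=; rewrite size_cat IH mulSn. Qed.

Lemma nth_flatten_nseq (w : seq bool) q k : k < q * size w ->
  nth false (flatten (nseq q w)) k = nth false w (k %% size w).
Proof.
elim: q k => [|q IH] k /=; first by rewrite mul0n.
rewrite mulSn nth_cat => hk.
case: ifP => h; first by rewrite modn_small.
have hk' : k - size w < q * size w by lia.
rewrite IH //.
have h' : size w <= k by lia.
by rewrite -{2}(subnK h') modnDr.
Qed.

Lemma inB_basic n c d x : inB n c d x ->
  [/\ size x = n, 1 <= d, c + d <= n & 1 <= c].
Proof.
case=> [[sz h1 h2 h3] _]; split => //.
- move: h3; rewrite leq_min => /andP [a b]; lia.
- move: h3; rewrite leq_min => /andP [a b]; lia.
Qed.

Lemma inB_nth n c d x : inB n c d x ->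
  (forall i, i < c + d - 1 -> nth false x i = nth false x (i %% d)) /\
  nth false x (c + d - 1) != nth false x ((c + d - 1) %% d).
Proof.
move=> hB; have [sz d1 cdn c1] := inB_basic hB.
case: hB => _ [_ _ E].
set q := (c + d - 1) %/ d in E; set r := c + d - 1 - q * d in E.
have Hr : r = (c + d - 1) %% d by rewrite /r /q; have := divn_eq (c + d - 1) d; lia.
have rd : r < d by rewrite Hr ltn_mod.
have qr : c + d - 1 = q * d + r by rewrite Hr /q -divn_eq.
have sztd : size (take d x) = d by rewrite size_take; case: ltngtP; lia.
have key : forall i, i < c + d -> nth false x i = nth false (take (c + d) x) i.
  by move=> i hi; rewrite nth_take.
split.
- move=> i hi; rewrite key; last by lia.
  rewrite E nth_cat size_flatten_nseq sztd.
  case: ifP => hq.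
    by rewrite nth_flatten_nseq sztd // nth_take // ltn_mod; lia.
  rewrite nth_rcons size_take.
  have -> : (if r < size x then r else size x) = r by case: ifP => //; lia.
  have hir : i - q * d < r by lia.
  rewrite hir nth_take //.
  have -> : i %% d = i - q * d.
    have e : i = (i - q * d) + q * d by lia.
    by rewrite {1}e addnC modnMDl modn_small //; lia.
  by [].
- rewrite key; last by lia.
  rewrite E nth_cat size_flatten_nseq sztd.
  have -> : (c + d - 1 < q * d) = false by lia.
  rewrite nth_rcons size_take.
  have -> : (if r < size x then r else size x) = r by case: ifP => //; lia.
  have -> : c + d - 1 - q * d = r by lia.
  rewrite ltnn eqxx -Hr.
  by case: (nth false x r).
Qed.

Lemma run_facts n c d x t : inB n c d x -> is_add n d x t ->
  (forall j, n - t <= j -> j <= n + c - 2 ->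
     nth false x (j %% n) = nth false x ((j + d) %% n)) /\
  nth false x ((c - 1) %% n) != nth false x ((c + d - 1) %% n).
Proof.
move=> hB [tn Ht Hne].
have [sz d1 cdn c1] := inB_basic hB.
have [Hn Hb] := inB_nth hB.
split.
- move=> j hj1 hj2.
  case: (leqP n j) => hjn.
  + have e1 : j %% n = j - n.
      have -> : j = (j - n) + n by lia.
      by rewrite modnDr modn_small; lia.
    have e2 : (j + d) %% n = j - n + d.
      have -> : j + d = (j - n + d) + n by lia.
      by rewrite modnDr modn_small; lia.
    rewrite e1 e2 (Hn (j - n)); last by lia.
    rewrite (Hn (j - n + d)); last by lia.
    by rewrite modnDr.
  + rewrite (modn_small hjn).
    have hi : n - 1 - j < t by lia.
    have ej : j = n - 1 - (n - 1 - j) by lia.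
    rewrite {1}ej (Ht _ hi).
    case: (ltnP (n - 1 - j) d) => hid.
    * have -> : (j + d) %% n = d - 1 - (n - 1 - j).
        have -> : j + d = (d - 1 - (n - 1 - j)) + n by lia.
        by rewrite modnDr modn_small; lia.
      by rewrite (modn_small hid).
    * have -> : (j + d) %% n = n - 1 - (n - 1 - j - d).
        by rewrite modn_small; lia.
      have hi2 : n - 1 - j - d < t by lia.
      rewrite (Ht _ hi2).
      have -> : (n - 1 - j) %% d = (n - 1 - j - d) %% d.
        have -> : n - 1 - j = (n - 1 - j - d) + d by lia.
        by rewrite modnDr addnK.
      by [].
- rewrite (modn_small (_ : c - 1 < n)); last by lia.
  rewrite (modn_small (_ : c + d - 1 < n)); last by lia.
  rewrite (Hn (c - 1)); last by lia.
  have -> : (c - 1) %% d = (c + d - 1) %% d.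
    have -> : c + d - 1 = (c - 1) + d by lia.
    by rewrite modnDr.
  by rewrite eq_sym.
Qed.

Lemma cyc_contra (y : nat -> bool) m d k0 : 0 < d -> d <= m -> k0 < m ->
  (forall k, k < m -> k != k0 -> k + d < m -> y k = y (k + d)) ->
  (forall k, k < m -> k != k0 -> m <= k + d -> y k = y (k + d - m)) ->
  y k0 != y (if k0 + d < m then k0 + d else k0 + d - m) -> False.
Proof.
move=> d0 dm k0m H1 H2 Hne.
suff E : y k0 = y (if k0 + d < m then k0 + d else k0 + d - m) by rewrite E eqxx in Hne.
apply: one_defect => // k km kk0; case: ifP => h.
- exact: H1.
- by apply: H2 => //; lia.
Qed.

Lemma nth_rotr_mod (s : seq bool) n b j : size s = n -> 0 < n -> b <= n ->
  nth false (rotr b s) (j %% n) = nth false s ((j + (n - b)) %% n).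
Proof.
move=> sz n0 bn.
rewrite /rotr /rot sz nth_cat size_drop sz -modnDml.
have kn : j %% n < n by rewrite ltn_mod.
set k := j %% n in kn *.
case: ifP => h.
- rewrite nth_drop modn_small; last by lia.
  by rewrite addnC.
- rewrite nth_take; last by lia.
  have -> : k + (n - b) = (k - (n - (n - b))) + n by lia.
  by rewrite modnDr modn_small; [congr nth; lia | lia].
Qed.

Lemma per_mul (U : nat -> bool) p : (forall i, U (i + p) = U i) ->
  forall x i, U (i + x * p) = U i.
Proof.
move=> H; elim=> [|x IH] i; first by rewrite mul0n addn0.
by rewrite mulSn (addnC p) addnA H IH.
Qed.
Unset Implicit Arguments.
Theorem lemma7 (n c d2 b t1 t2 : nat) (s : seq bool) :
  n <= c.*2 ->                          (* c >= ceil(n/2) *)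
  inB n c (n - c) s ->
  is_add n (n - c) s t1 ->
  0 < b -> b < n ->
  inB n c d2 (Rshift b s) ->
  is_add n d2 (Rshift b s) t2 ->
  t1 <= t2 ->
  (n - c) + d2 <= c + t2 + t1 + 1 ->
  b = d2.
Proof.
move=> hc hS aS b0 bn hW aW t12 Hyp.
have [szs d1pos cdn c1] := inB_basic hS.
have [szw d2pos cd2n _] := inB_basic hW.
have d2le : d2 <= n - c.
  by case: hW => [[_ _ _ h]] _; move: h; rewrite leq_min => /andP [].
have n0 : 0 < n by lia.
set d1 := n - c in hS aS Hyp d1pos cdn d2le.
have nE : n = c + d1 by rewrite /d1; lia.
have cd1 : d1 <= c by rewrite /d1; lia.
pose f i := nth false s (i %% n).
have fP : forall i, f (i + n) = f i by move=> i; rewrite /f modnDr.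
have fPk : forall k i, f (i + k * n) = f i.
  elim=> [|k IH] i; first by rewrite mul0n addn0.
  by rewrite mulSn (addnC n) addnA fP IH.
have fsh : forall k q, k * n <= q -> f q = f (q - k * n).
  by move=> k q h; rewrite -{1}(subnK h) fPk.
have t1n : t1 < n by case: aS.
have t2n : t2 < n by case: aW.
have [U0 Ur0] := run_facts hS aS.
have [V0 Vr0] := run_facts hW aW.
have Wf : forall j, nth false (Rshift b s) (j %% n) = f (j + (n - b)).
  by move=> j; rewrite /Rshift nth_rotr_mod //; lia.
rewrite !Wf in Vr0.
have U2 : forall q, 3 * n - t1 <= q -> q <= 3 * n + c - 2 -> f q = f (q + d1).
  move=> q h1 h2.
  rewrite (fsh 2 q) ?(fsh 2 (q + d1)); try lia.
  have -> : q + d1 - 2 * n = q - 2 * n + d1 by lia.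
  apply: U0; lia.
have U1 : forall q, 2 * n - t1 <= q -> q <= 2 * n + c - 2 -> f q = f (q + d1).
  move=> q h1 h2.
  rewrite (fsh 1 q) ?(fsh 1 (q + d1)); try lia.
  have -> : q + d1 - 1 * n = q - 1 * n + d1 by lia.
  apply: U0; lia.
have Ur2 : f (2 * n + c - 1) != f (2 * n + c + d1 - 1).
  have -> : 2 * n + c - 1 = (c - 1) + 2 * n by lia.
  have -> : 2 * n + c + d1 - 1 = (c + d1 - 1) + 2 * n by lia.
  by rewrite !fPk.
have V1 : forall q, 3 * n - b - t2 <= q -> q <= 3 * n + c - 2 - b -> f q = f (q + d2).
  move=> q h1 h2.
  have := V0 (q + b - 2 * n) ltac:(lia) ltac:(lia).
  rewrite !Wf.
  have -> : q + b - 2 * n + (n - b) = q - 1 * n by lia.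
  have -> : q + b - 2 * n + d2 + (n - b) = q + d2 - 1 * n by lia.
  by rewrite -!fsh //; lia.
have Vr2 : f (3 * n - b + c - 1) != f (3 * n - b + c + d2 - 1).
  rewrite (fsh 2 (3 * n - b + c - 1)) ?(fsh 2 (3 * n - b + c + d2 - 1)); try lia.
  have -> : 3 * n - b + c - 1 - 2 * n = c - 1 + (n - b) by lia.
  by have -> : 3 * n - b + c + d2 - 1 - 2 * n = c + d2 - 1 + (n - b) by lia.
have Ur2' : f (2 * n + c - 1) != f (3 * n - 1).
  by have -> : 3 * n - 1 = 2 * n + c + d1 - 1 by lia.
have fE : forall p, p < n -> f p = nth false s p by move=> p hp; rewrite /f modn_small.
clear U0 V0 Ur0 Vr0 Wf fsh.
clearbody f.
case: (ltngtP b d2) => hbd //.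
-
  have lt1 : b + t2 < d2.
    case: (ltnP (b + t2) d2) => // h.
    exfalso; apply: (@cyc_contra (fun k => f (3 * n + k)) c d2 (c - 1)); try lia.
    + move=> k km kk hk; rewrite addnA; apply: V1; lia.
    + move=> k km kk hk.
      have k1 : k <= c - 2 by move/eqP: kk; lia.
      rewrite U2; try lia.
      have -> : 3 * n + k + d1 = (3 * n + k - c) + 1 * n by lia.
      rewrite fPk V1; try lia.
      by congr f; lia.
    + have -> : (c - 1 + d2 < c) = false by lia.
      have -> : 3 * n + (c - 1 + d2 - c) = 3 * n - 1 + d2 by lia.
      rewrite -V1; try lia.
      have -> : 3 * n + (c - 1) = (2 * n + c - 1) + 1 * n by lia.
      by rewrite fPk.
  have lt2 : c - d1 + t1 < b.
    case: (ltnP (c - d1 + t1) b) => // h.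
    exfalso.
    apply: (@cyc_contra (fun k => f (3 * n + c - b - d1 + k)) (d1 + d2) d2 (d1 - 1)); try lia.
    + move=> k km kk hk; rewrite addnA; apply: V1; move/eqP: kk; lia.
    + move=> k km kk hk.
      have -> : 3 * n + c - b - d1 + (k + d2 - (d1 + d2)) = 3 * n + c - b - 2 * d1 + k by lia.
      rewrite [RHS]U2; try lia.
      by congr f; lia.
    + have -> : (d1 - 1 + d2 < d1 + d2) = true by lia.
      have -> : 3 * n + c - b - d1 + (d1 - 1) = 3 * n - b + c - 1 by lia.
      by have -> : 3 * n + c - b - d1 + (d1 - 1 + d2) = 3 * n - b + c + d2 - 1 by lia.
  lia.
-
  case: (ltngtP b (c + d2)) => hbc.
  + have gt1 : c + t1 < b.
      case: (ltnP (c + t1) b) => // h.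
      exfalso.
      apply: (@cyc_contra (fun k => f (3 * n - b + k)) (c + d2) d2 (c - 1)); try lia.
      * move=> k km kk hk; rewrite addnA; apply: V1; move/eqP: kk; lia.
      * move=> k km kk hk.
        rewrite U2; try lia.
        have -> : 3 * n - b + k + d1 = (3 * n - b + (k + d2 - (c + d2))) + 1 * n by lia.
        by rewrite fPk.
      * have -> : (c - 1 + d2 < c + d2) = true by lia.
        have -> : 3 * n - b + (c - 1) = 3 * n - b + c - 1 by lia.
        by have -> : 3 * n - b + (c - 1 + d2) = 3 * n - b + c + d2 - 1 by lia.
    have gt2 : b + t2 < d1 + d2.
      case: (ltnP (b + t2) (d1 + d2)) => // h.
      exfalso.
      apply: (@cyc_contra (fun k => f (3 * n - d1 - d2 + k)) (d1 + d2) d1 (d2 - 1)); try lia.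
      * move=> k km kk hk; rewrite addnA; apply: U1; move/eqP: kk; lia.
      * move=> k km kk hk.
        rewrite [RHS]V1; try lia.
        by congr f; lia.
      * have -> : (d2 - 1 + d1 < d1 + d2) = true by lia.
        have -> : 3 * n - d1 - d2 + (d2 - 1) = 2 * n + c - 1 by lia.
        by have -> : 3 * n - d1 - d2 + (d2 - 1 + d1) = 3 * n - 1 by lia.
    lia.
  + exfalso.
    apply: (@cyc_contra (fun k => f (3 * n + c - b - d1 + k)) (d1 + d2) d2 (d1 - 1)); try lia.
    * move=> k km kk hk; rewrite addnA; apply: V1; move/eqP: kk; lia.
    * move=> k km kk hk.
      have -> : 3 * n + c - b - d1 + (k + d2 - (d1 + d2)) = 3 * n + c - b - 2 * d1 + k by lia.
      rewrite [RHS]U1; try lia.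
      by congr f; lia.
    * have -> : (d1 - 1 + d2 < d1 + d2) = true by lia.
      have -> : 3 * n + c - b - d1 + (d1 - 1) = 3 * n - b + c - 1 by lia.
      by have -> : 3 * n + c - b - d1 + (d1 - 1 + d2) = 3 * n - b + c + d2 - 1 by lia.
  + (* b = c + d2 : primitivity *)
    exfalso.
    have hd : d2 < d1 by lia.
    have [Sn _] := inB_nth hS.
    have fres : forall p p', p < n - 1 -> p' < n - 1 -> p %% d1 = p' %% d1 -> f p = f p'.
      move=> p p' hp hp' e.
      rewrite fE ?(fE p'); try lia.
      rewrite Sn ?(Sn p'); try lia.
      by rewrite e.
    have Vp : forall p, d1 - d2 <= p -> p <= 2 * d1 - d2 - 2 -> f p = f (p + d2).
      move=> p h1 h2.
      have := V1 (p + 2 * n) ltac:(lia) ltac:(lia).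
      by rewrite -addnA (addnC (2 * n)) addnA !fPk.
    have Hall : forall k, k < d1 -> f k = f (if k + d2 < d1 then k + d2 else k + d2 - d1).
      have Hp : forall k, k < d1 -> k != d1 - d2 - 1 ->
          f k = f (if k + d2 < d1 then k + d2 else k + d2 - d1).
        move=> k kd kk; case: ifP => h.
        - rewrite (fres k (k + d1)); try lia; last by rewrite modnDr.
          rewrite Vp; try (move/eqP: kk; lia).
          apply: fres; try lia.
          by rewrite -addnA (addnC d1) addnA modnDr.
        - rewrite Vp; try lia.
          apply: fres; try lia.
          have hh : d1 <= k + d2 by lia.
          by rewrite -[in LHS](subnK hh) modnDr.
      move=> k kd.
      case: (eqVneq k (d1 - d2 - 1)) => [->|kk]; last exact: Hp.
      apply: one_defect; try lia.
      exact: Hp.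
    pose U i := f (i %% d1).
    have Ud1 : forall i, U (i + d1) = U i by move=> i; rewrite /U modnDr.
    have Ud2 : forall i, U (i + d2) = U i.
      move=> i; rewrite /U -modnDml.
      have im : i %% d1 < d1 by rewrite ltn_mod; lia.
      rewrite (Hall _ im).
      case: ifP => h; first by rewrite modn_small.
      have hh : d1 <= i %% d1 + d2 by lia.
      rewrite -[in LHS](subnK hh) modnDr modn_small //; lia.
    set g := gcdn d1 d2.
    have g0 : 0 < g by rewrite gcdn_gt0; lia.
    have gd2 : g <= d2 by apply: dvdn_leq; [lia | exact: dvdn_gcdr].
    have gd1 : g %| d1 by exact: dvdn_gcdl.
    have hd1 : 0 < d1 by lia.
    have [a _ ha] := Bezoutl d2 hd1.
    have Ug : forall i, U (i + g) = U i.
      move=> i.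
      rewrite -(per_mul Ud2 a (i + g)) -addnA.
      rewrite -(divnK ha).
      exact: (@per_mul U d1 Ud1).
    have fg : forall k, k < d1 -> f k = f (k %% g).
      move=> k kd.
      have e1 : f k = U k by rewrite /U modn_small.
      have e2 : f (k %% g) = U (k %% g).
        have hk : k %% g < g by rewrite ltn_mod.
        have hk2 : k %% g < d1 by apply: (leq_trans hk); lia.
        by rewrite /U (modn_small hk2).
      rewrite e1 e2 {1}(divn_eq k g) addnC.
      exact: (@per_mul U g Ug).
    case: hS => _ [_ apS _].
    apply: apS.
    have szt : size (take d1 s) = d1 by rewrite size_takel //; lia.
    exists g; rewrite szt; split => //; first by lia.
    apply: (@eq_from_nth _ false).
      rewrite size_flatten_nseq szt size_takel; last by rewrite szt; lia.
      by rewrite divnK.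
    move=> i; rewrite szt => hi.
    have hgi : i %% g < g by rewrite ltn_mod.
    have hgi2 : i %% g < d1 by apply: (leq_trans hgi); lia.
    have hgi3 : i %% g < n by apply: (leq_trans hgi2); lia.
    rewrite nth_flatten_nseq; last first.
      by rewrite size_takel ?divnK // szt; lia.
    rewrite size_takel; last by rewrite szt; lia.
    rewrite nth_take // nth_take //.
    rewrite nth_take //.
    rewrite -fE; last by lia.
    rewrite -fE //.
    exact: fg.
Qed.
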